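(* Let $n\ge 3$ and let $\Gamma$ be a signed graph on the $2n$ vertices $V_1\cup V_2$, $V_1=\{u_1,\dots,u_n\}$, $V_2=\{v_1,\dots,v_n\}$, whose only edges are the positive edges of the path $u_1u_2\cdots u_n$ and the positive edges of the path $v_1v_2\cdots v_n$ (so there are no edges between $V_1$ and $V_2$). Let $\Gamma_1$ be obtained from $\Gamma$ by adding a positive edge $u_1u_n$, a negative edge $u_1v_1$ and a positive edge $u_1v_n$. Then: (i) $\Gamma_1$ and its partial transpose $\Gamma_1^{\tau}$ (with respect to the labelled partition $V_1,V_2$) are non-isomorphic and Laplacian cospectral; (ii) let $\Gamma_2$ be obtained from $\Gamma_1$ by changing the sign of the edge $u_{n-1}u_n$ to negative and the sign of the edge $u_1v_1$ to positive, and let $\Gamma_3$ be obtained from $\Gamma_1^{\tau}$ by changing the sign of the edge $u_{n-1}u_n$ to negative. Then $\Gamma_2$ and $\Gamma_3$ are non-isomorphic and Laplacian cospectral.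
   Context: A signed graph $\Gamma=(G,\sigma)$ is a simple graph $G$ with a sign function $\sigma:E(G)\to\{1,-1\}$. Its adjacency matrix $A(\Gamma)=(a_{ij})$ has $a_{ij}=\sigma(v_iv_j)$ if $v_iv_j\in E(G)$ and $0$ otherwise; its Laplacian matrix is $L(\Gamma)=D(G)-A(\Gamma)$, where $D(G)$ is the diagonal matrix of vertex degrees of $G$. Two signed graphs are Laplacian cospectral if their Laplacian matrices have the same spectrum (with multiplicities). Two signed graphs are isomorphic if there is an isomorphism of the underlying graphs preserving the signs of edges. Partial transpose: let $\Gamma$ be a signed graph whose vertex set is the disjoint union of $V_1=\{u_1,\dots,u_n\}$ and $V_2=\{v_1,\dots,v_n\}$ (with these labellings fixed). The partial transpose $\Gamma^{\tau}$ is the signed graph on the same vertex set in which all edges with both ends in $V_1$ or both ends in $V_2$ are kept with their signs, all edges between $V_1$ and $V_2$ are removed, and for every edge $u_iv_j$ of $\Gamma$ with sign $s$, an edge $u_jv_i$ with sign $s$ is added. (Thus $u_jv_i$ is an edge of $\Gamma^\tau$ with sign $s$ iff $u_iv_j$ is an edge of $\Gamma$ with sign $s$; edges $u_iv_i$ are unchanged.) *)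

(* Defs.v *)
From mathcomp Require Import all_boot all_order all_algebra all_fingroup.
From mathcomp Require Import algC.
Set Implicit Arguments. Unset Strict Implicit. Unset Printing Implicit Defensive.
Import GRing.Theory Num.Theory.
Local Open Scope ring_scope.

(* A signed graph on the vertex set 'I_m, given by its sign function:
   sg x y = sigma(xy) in {1,-1} if xy is an edge, and 0 otherwise. *)
Definition sgraph (m : nat) := 'I_m -> 'I_m -> int.

Definition adjmx m (s : sgraph m) : 'M[algC]_m := \matrix_(i, j) (s i j)%:~R.
Definition degree m (s : sgraph m) (i : 'I_m) : nat := #|[pred k | s i k != 0]|.
Definition degmx m (s : sgraph m) : 'M[algC]_m :=
  \matrix_(i, j) ((i == j)%:R * (degree s i)%:R).
Definition laplacian m (s : sgraph m) : 'M[algC]_m := degmx s - adjmx s.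

(* Laplacian cospectral: same Laplacian spectrum with multiplicities, i.e.
   the same characteristic polynomial over the algebraically closed algC. *)
Definition lap_cospectral m (s t : sgraph m) : Prop :=
  char_poly (laplacian s) = char_poly (laplacian t).

Definition sg_iso m (s t : sgraph m) : Prop :=
  exists f : {perm 'I_m}, forall x y, t (f x) (f y) = s x y.

(* Vertex labels on 'I_(n+n): u_k is vertex k-1 and v_k is vertex n+k-1
   (k = 1..n), so V1 = {0..n-1}, V2 = {n..2n-1}. *)
Definition uu (k : nat) : nat := k.-1.
Definition vv (n k : nat) : nat := (n + k.-1)%N.

Definition setsign m (s : sgraph m) (a b : nat) (e : int) : sgraph m :=
  fun x y => if ((x == a :> nat) && (y == b :> nat)) ||
                ((x == b :> nat) && (y == a :> nat)) then e else s x y.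

(* Partial transpose w.r.t. V1 = lshift part, V2 = rshift part:
   u_i v_j in Gamma^tau has the sign of u_j v_i in Gamma. *)
Definition ptrans n (s : sgraph (n + n)) : sgraph (n + n) :=
  fun x y => match split x, split y with
  | inl i, inr j => s (lshift n j) (rshift n i)
  | inr j, inl i => s (rshift n i) (lshift n j)
  | _, _ => s x y
  end.

Definition gamma0 (n : nat) : sgraph (n + n) :=
  fun x y => if (((x : nat).+1 == y) || ((y : nat).+1 == x)) &&
                (((x : nat) < n)%N == ((y : nat) < n)%N) then 1 else 0.
Arguments gamma0 : clear implicits.

Definition gamma1 (n : nat) : sgraph (n + n) :=
  setsign (setsign (setsign (gamma0 n) (uu 1) (uu n) 1)
                   (uu 1) (vv n 1) (-1))
          (uu 1) (vv n n) 1.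
Arguments gamma1 : clear implicits.

Definition gamma2 (n : nat) : sgraph (n + n) :=
  setsign (setsign (gamma1 n) (uu n.-1) (uu n) (-1)) (uu 1) (vv n 1) 1.
Arguments gamma2 : clear implicits.

Definition gamma3 (n : nat) : sgraph (n + n) :=
  setsign (ptrans (gamma1 n)) (uu n.-1) (uu n) (-1).
Arguments gamma3 : clear implicits.

(* Main.v *)
Require Import Defs.
From mathcomp Require Import all_boot all_order all_algebra all_fingroup.
From mathcomp Require Import algC zify ring.
Set Implicit Arguments. Unset Strict Implicit. Unset Printing Implicit Defensive.
Import GRing.Theory Num.Theory.
Local Open Scope ring_scope.

Lemma sim_cp m (A B S : 'M[int]_m) (c : int) :
  c != 0 -> S *m S = c%:M -> S *m A = B *m S -> char_poly A = char_poly B.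
Proof.
move=> c0 SS SA.
have dS : \det S != 0.
  apply/eqP=> d0; move/eqP: c0; apply.
  have := congr1 determinant SS; rewrite det_mulmx d0 mul0r det_scalar => /esym/eqP.
  by rewrite expf_eq0 => /andP[_ /eqP].
pose Sp := map_mx (@polyC int) S.
have key : char_poly_mx B *m Sp = Sp *m char_poly_mx A.
  rewrite /char_poly_mx mulmxBl mulmxBr -!map_mxM -SA.
  by rewrite mul_scalar_mx mul_mx_scalar.
have := congr1 determinant key; rewrite !det_mulmx /Sp det_map_mx /=.
have nz : (\det S)%:P != 0 by rewrite polyC_eq0.
by rewrite mulrC => /(mulfI nz).
Qed.

Definition Lint m (s : sgraph m) : 'M[int]_m :=
  \matrix_(i, j) ((if i == j then (degree s i)%:Z else 0) - s i j).

Lemma lapE m (s : sgraph m) : laplacian s = map_mx intr (Lint s).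
Proof.
apply/matrixP=> i j; rewrite !mxE rmorphB /=.
by case: eqP => _; rewrite ?mul1r ?mul0r ?rmorph0 //= -pmulrn.
Qed.

Lemma cosp m (s t : sgraph m) (S : 'M[int]_m) (c : int) :
  c != 0 -> S *m S = c%:M -> S *m Lint s = Lint t *m S -> lap_cospectral s t.
Proof.
move=> c0 SS SA; rewrite /lap_cospectral !lapE -!map_char_poly.
by rewrite (sim_cp c0 SS SA).
Qed.

Ltac atom b := lazymatch b with
 | true => fail
 | false => fail
 | (true == ?q) => atom q
 | (false == ?q) => atom q
 | (?q == true) => atom q
 | (?q == false) => atom q
 | false && ?q => fail
 | true || ?q => fail
 | true && ?q => atom q
 | false || ?q => atom q
 | ?p && ?q => atom p
 | ?p || ?q => atom p
 | ~~ ?p => atom p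
 | (?p == ?q) => let T := type of p in lazymatch T with bool => atom p | _ => b end
 | _ => b
end.

Ltac decide_atom a :=
  let H := fresh "H" in
  first [ (have H : a by lia); progress rewrite H
        | (have H : ~~ a by lia); progress rewrite (negbTE H)
        | lazymatch a with
          | (?u == ?v) => case: (boolP a) => H; [try (move/eqP: H => H; subst) | ]; try (exfalso; lia)
          | (?u < ?v)%N => case: (ltnP u v) => H; try (exfalso; lia)
          | (?u <= ?v)%N => case: (leqP u v) => H; try (exfalso; lia)
          | _ => case: (boolP a) => H; try (exfalso; lia) end ].

Ltac split_ifs := repeat (match goal with
 | |- context[if ?b then _ else _] =>
    lazymatch b with context[if _ then _ else _] => fail | _ =>
      let a := atom b in decide_atom a end end; rewrite /=).

Ltac cls n x :=
  (have : [|| x == 0%N, (0 < x < n.-1)%N, x == n.-1, x == n, (n < x < (n + n).-1)%N | x == (n + n).-1]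
    by lia);
  case/or4P => [/eqP ? | /andP[? ?] | /eqP ? | /or3P [/eqP ? | /andP[? ?] | /eqP ?]]; subst.

Ltac dummy := idtac.
Lemma boolz (b : bool) : (b%:Z) = if b then 1 else 0.
Proof. by case: b. Qed.
Section Idx.
Variable n : nat.

Definition rvn (i : nat) : nat := if (i < n)%N then (n.-1 - i)%N else ((3 * n).-1 - i)%N.
Definition swn (i : nat) : nat := if (i < n)%N then (i + n)%N else (i - n)%N.

Lemma rvn_lt (i : 'I_(n + n)) : (rvn i < n + n)%N.
Proof. have := ltn_ord i; rewrite /rvn; case: ifP; lia. Qed.
Lemma swn_lt (i : 'I_(n + n)) : (swn i < n + n)%N.
Proof. have := ltn_ord i; rewrite /swn; case: ifP; lia. Qed.

Definition rv (i : 'I_(n + n)) : 'I_(n + n) := Ordinal (rvn_lt i).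
Definition sw (i : 'I_(n + n)) : 'I_(n + n) := Ordinal (swn_lt i).

Lemma rvK : involutive rv.
Proof. move=> i; apply: val_inj => /=; have := ltn_ord i; rewrite /rvn => ?; split_ifs; lia. Qed.
Lemma swK : involutive sw.
Proof. move=> i; apply: val_inj => /=; have := ltn_ord i; rewrite /swn => ?; split_ifs; lia. Qed.
Lemma rv_sw i : rv (sw i) = sw (rv i).
Proof. apply: val_inj => /=; have := ltn_ord i; rewrite /swn /rvn => ?; split_ifs; lia. Qed.

Definition Smx (c0 c1 c2 c3 : 'I_(n + n) -> int) : 'M[int]_(n + n) :=
  \matrix_(i, k) (c0 i * (k == i)%:Z + c1 i * (k == rv i)%:Z
                  + c2 i * (k == sw i)%:Z + c3 i * (k == sw (rv i))%:Z).

Lemma sum_delta (F : 'I_(n + n) -> int) (x : 'I_(n + n)) (c : int) :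
  \sum_k c * (k == x)%:Z * F k = c * F x.
Proof.
rewrite (bigD1 x) //= eqxx mulr1 big1 ?addr0 // => k /negbTE ->.
by rewrite mulr0 mul0r.
Qed.

Lemma sum_delta' (F : 'I_(n + n) -> int) (x : 'I_(n + n)) :
  \sum_k F k * (k == x)%:Z = F x.
Proof.
rewrite (bigD1 x) //= eqxx mulr1 big1 ?addr0 // => k /negbTE ->.
by rewrite mulr0.
Qed.

Lemma mulSmx c0 c1 c2 c3 (A : 'M[int]_(n + n)) i j :
  (Smx c0 c1 c2 c3 *m A) i j =
  c0 i * A i j + c1 i * A (rv i) j + c2 i * A (sw i) j + c3 i * A (sw (rv i)) j.
Proof.
rewrite mxE; under eq_bigr do rewrite mxE !mulrDl.
by rewrite !big_split /= !sum_delta.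
Qed.

Lemma eq_inv (f : 'I_(n + n) -> 'I_(n + n)) : involutive f ->
  forall j k, (j == f k) = (k == f j).
Proof.
move=> fK j k; apply/eqP/eqP => [->|->]; by rewrite fK.
Qed.

Lemma swrvK : involutive (fun i => sw (rv i)).
Proof. by move=> i /=; rewrite -rv_sw swK rvK. Qed.

Lemma sdf (f : 'I_(n + n) -> 'I_(n + n)) (fK : involutive f) (G c : 'I_(n + n) -> int) j :
  \sum_k G k * (c k * (j == f k)%:Z) = G (f j) * c (f j).
Proof.
rewrite (bigD1 (f j)) //= fK eqxx mulr1 big1 ?addr0 // => k kj.
have /negbTE -> : j != f k by apply: contra kj => /eqP ->; rewrite fK.
by rewrite mulr0 mulr0.
Qed.

Lemma sdi (G c : 'I_(n + n) -> int) j :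
  \sum_k G k * (c k * (j == k)%:Z) = G j * c j.
Proof. exact: (@sdf id (fun x => erefl) G c j). Qed.

Lemma mulmxS c0 c1 c2 c3 (A : 'M[int]_(n + n)) i j :
  (A *m Smx c0 c1 c2 c3) i j =
  c0 j * A i j + c1 (rv j) * A i (rv j) + c2 (sw j) * A i (sw j)
  + c3 (sw (rv j)) * A i (sw (rv j)).
Proof.
rewrite mxE; under eq_bigr do rewrite mxE !mulrDr.
rewrite !big_split /= sdi (sdf rvK) (sdf swK) (sdf swrvK).
by rewrite ![A i _ * _]mulrC.
Qed.

End Idx.

Lemma card_val m (l : seq nat) : uniq l -> all (fun y => (y < m)%N) l ->
  #|[pred k : 'I_m | val k \in l]| = size l.
Proof.
move=> ul al; rewrite cardE -(size_map val); apply: perm_size.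
apply: uniq_perm => //; first by rewrite (map_inj_uniq val_inj) enum_uniq.
move=> y; apply/mapP/idP => [[k] | yl].
  by rewrite mem_enum inE => kl ->.
have ym : (y < m)%N by move/allP: al; apply.
by exists (Ordinal ym) => //; rewrite mem_enum inE.
Qed.

Lemma deg_nb m (s : sgraph m) (g : nat -> nat -> int) (l : seq nat) (i : 'I_m) :
  (forall x y : 'I_m, s x y = g x y) -> uniq l -> all (fun y => (y < m)%N) l ->
  (forall y, (y < m)%N -> (g i y != 0) = (y \in l)) -> degree s i = size l.
Proof.
move=> sg ul al gl; rewrite /degree -(card_val ul al); apply: eq_card => k.
by rewrite !inE sg gl.
Qed.

Section G.
Variable n : nat.

Definition G0 (x y : nat) : int :=
  if ((x.+1 == y) || (y.+1 == x)) && ((x < n)%N == (y < n)%N) then 1 else 0.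
Definition SS (g : nat -> nat -> int) (a b : nat) (e : int) (x y : nat) : int :=
  if ((x == a) && (y == b)) || ((x == b) && (y == a)) then e else g x y.
Definition F1 := SS (SS (SS G0 (uu 1) (uu n) 1) (uu 1) (vv n 1) (-1)) (uu 1) (vv n n) 1.
Definition PT (g : nat -> nat -> int) (x y : nat) : int :=
  if (x < n)%N then (if (y < n)%N then g x y else g (y - n)%N (n + x)%N)
  else (if (y < n)%N then g (n + y)%N (x - n)%N else g x y).
Definition F1t := PT F1.
Definition F2 := SS (SS F1 (uu n.-1) (uu n) (-1)) (uu 1) (vv n 1) 1.
Definition F3 := SS F1t (uu n.-1) (uu n) (-1).

Lemma F1E (x y : 'I_(n + n)) : gamma1 n x y = F1 x y. Proof. by []. Qed.
Lemma F2E (x y : 'I_(n + n)) : gamma2 n x y = F2 x y. Proof. by []. Qed.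

Lemma PTE (s : sgraph (n + n)) (g : nat -> nat -> int) : (forall x y : 'I_(n + n), s x y = g x y) ->
  forall x y : 'I_(n + n), ptrans s x y = PT g x y.
Proof.
move=> sg x y; rewrite /ptrans /PT.
case: splitP => a ha; case: splitP => b hb; rewrite sg /= ?ha ?hb;
  have := ltn_ord a; have := ltn_ord b => ? ?; split_ifs; f_equal; lia.
Qed.

Lemma F1tE (x y : 'I_(n + n)) : ptrans (gamma1 n) x y = F1t x y.
Proof. exact: PTE F1E x y. Qed.
Lemma F3E (x y : 'I_(n + n)) : gamma3 n x y = F3 x y.
Proof. by rewrite /gamma3 /setsign F1tE. Qed.

End G.

Section Deg.
Variable n : nat.
Hypothesis hn : (2 < n)%N.

Definition D1 (x : nat) : nat := if x == 0%N then 4%N else 2%N.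
Definition Dt (x : nat) : nat :=
  if (x == 0%N) || (x == n.-1) || (x == n) then 3%N
  else if x == (n + n).-1 then 1%N else 2%N.

Definition nb1 (x : nat) : seq nat :=
  if x == 0%N then [:: 1%N; n.-1; n; (n + n).-1]
  else if (x < n)%N then [:: x.-1; if x == n.-1 then 0%N else x.+1]
  else if x == n then [:: n.+1; 0%N]
  else if x == (n + n).-1 then [:: x.-1; 0%N] else [:: x.-1; x.+1].
Definition nbt (x : nat) : seq nat :=
  if x == 0%N then [:: 1%N; n.-1; n]
  else if x == n.-1 then [:: x.-1; 0%N; n]
  else if (x < n)%N then [:: x.-1; x.+1]
  else if x == n then [:: n.+1; 0%N; n.-1]
  else if x == (n + n).-1 then [:: x.-1] else [:: x.-1; x.+1].

Lemma nb1_ok (x : nat) : (x < n + n)%N ->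
  [/\ uniq (nb1 x), all (fun y => (y < n + n)%N) (nb1 x) & size (nb1 x) = D1 x].
Proof. move=> hx; rewrite /nb1 /D1; split_ifs; rewrite /= ?inE; split => //; lia. Qed.
Lemma nbt_ok (x : nat) : (x < n + n)%N ->
  [/\ uniq (nbt x), all (fun y => (y < n + n)%N) (nbt x) & size (nbt x) = Dt x].
Proof. move=> hx; rewrite /nbt /Dt; split_ifs; rewrite /= ?inE; split => //; lia. Qed.


Ltac memtac := move=> hx hy; rewrite /F2 /F3 /F1t /PT /F1 /SS /G0 /uu /vv /nb1 /nbt;
  split_ifs; rewrite ?inE; try done; apply/idP/idP => ?; lia.

Lemma mem1 x y : (x < n + n)%N -> (y < n + n)%N -> (F1 n x y != 0) = (y \in nb1 x).
Proof. memtac. Qed.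
Lemma mem2 x y : (x < n + n)%N -> (y < n + n)%N -> (F2 n x y != 0) = (y \in nb1 x).
Proof. memtac. Qed.
Lemma memt x y : (x < n + n)%N -> (y < n + n)%N -> (F1t n x y != 0) = (y \in nbt x).
Proof. memtac. Qed.
Lemma mem3 x y : (x < n + n)%N -> (y < n + n)%N -> (F3 n x y != 0) = (y \in nbt x).
Proof. memtac. Qed.

Lemma deg1 i : degree (gamma1 n) i = D1 i.
Proof.
have [u a s] := nb1_ok (ltn_ord i); rewrite -s.
by apply: deg_nb (@F1E n) u a _ => y hy; apply: mem1.
Qed.
Lemma deg2 i : degree (gamma2 n) i = D1 i.
Proof.
have [u a s] := nb1_ok (ltn_ord i); rewrite -s.
by apply: deg_nb (@F2E n) u a _ => y hy; apply: mem2.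
Qed.
Lemma degt i : degree (ptrans (gamma1 n)) i = Dt i.
Proof.
have [u a s] := nbt_ok (ltn_ord i); rewrite -s.
by apply: deg_nb (@F1tE n) u a _ => y hy; apply: memt.
Qed.
Lemma deg3 i : degree (gamma3 n) i = Dt i.
Proof.
have [u a s] := nbt_ok (ltn_ord i); rewrite -s.
by apply: deg_nb (@F3E n) u a _ => y hy; apply: mem3.
Qed.

End Deg.

Lemma LintE m (s : sgraph m) (g : nat -> nat -> int) (d : nat -> nat) :
  (forall x y : 'I_m, s x y = g x y) -> (forall x : 'I_m, degree s x = d x) ->
  forall i j : 'I_m, Lint s i j = (if ((i : nat) == (j : nat)) then (d i)%:Z else 0) - g i j.
Proof. by move=> sg sd i j; rewrite mxE sg sd. Qed.

Section Big.
Variable n : nat.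
Hypothesis hn : (2 < n)%N.

Definition Pb (neg : bool) (x y : nat) : int :=
  if x == y then (if (x == 0%N) || (x == n.-1) || (x == n) || (x == (n + n).-1) then 1 else 2)
  else if ((x.+1 == y) || (y.+1 == x)) && ((x < n)%N == (y < n)%N) then
    (if neg && (((x == n.-2) && (y == n.-1)) || ((x == n.-1) && (y == n.-2))) then 1 else -1)
  else 0.
Definition code (x : nat) : nat :=
  if x == 0%N then 0%N else if x == n.-1 then 1%N else if x == n then 2%N else 3%N.
Definition inK (x : nat) : bool := (x == 0%N) || (x == n.-1) || (x == n) || (x == (n + n).-1).
Definition Kv (tab : seq (seq int)) (x y : nat) : int :=
  if inK x && inK y then nth 0 (nth [::] tab (code x)) (code y) else 0.

Definition Mb neg : 'M[int]_(n + n) := \matrix_(i, j) Pb neg i j.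
Definition Me tab : 'M[int]_(n + n) := \matrix_(i, j) Kv tab i j.

Definition tab1 : seq (seq int) := [:: [:: 3; -1; 1; -1]; [:: -1; 1; 0; 0]; [:: 1; 0; 1; 0]; [:: -1; 0; 0; 1]].
Definition tabt : seq (seq int) := [:: [:: 2; -1; 1; 0]; [:: -1; 2; -1; 0]; [:: 1; -1; 2; 0]; [:: 0; 0; 0; 0]].
Definition tab2 : seq (seq int) := [:: [:: 3; -1; -1; -1]; [:: -1; 1; 0; 0]; [:: -1; 0; 1; 0]; [:: -1; 0; 0; 1]].

Definition cb (a b : int) (i : 'I_(n + n)) : int := if (i < n)%N then a else b.
Definition S1 := Smx (cb (-1) (-1)) (cb 1 1) (cb (-1) (-1)) (cb (-1) (-1)).
Definition Sb := Smx (cb (-1) 1) (cb (-1) 1) (cb (-1) (-1)) (cb 1 1).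

Lemma L1dec : Lint (gamma1 n) = Mb false + Me tab1.
Proof.
apply/matrixP => i j; rewrite (LintE (@F1E n) (deg1 hn)) !mxE.
move: (ltn_ord i) (ltn_ord j); move: (nat_of_ord i) (nat_of_ord j) => x y hx hy.
rewrite /Pb /Kv /inK /code /D1 /F1 /SS /G0 /uu /vv.
split_ifs; lia.
Qed.

Lemma rvn_ltn x : (x < n + n)%N -> (rvn n x < n + n)%N.
Proof. rewrite /rvn => ?; split_ifs; lia. Qed.
Lemma swn_ltn x : (x < n + n)%N -> (swn n x < n + n)%N.
Proof. rewrite /swn => ?; split_ifs; lia. Qed.
Lemma inK_rv x : (x < n + n)%N -> inK (rvn n x) = inK x.
Proof. rewrite /rvn /inK => ?; split_ifs; lia. Qed.
Lemma inK_sw x : (x < n + n)%N -> inK (swn n x) = inK x.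
Proof. rewrite /swn /inK => ?; split_ifs; lia. Qed.
Lemma Kv0l tab x y : ~~ inK x -> Kv tab x y = 0.
Proof. by rewrite /Kv => /negbTE ->. Qed.
Lemma Kv0r tab x y : ~~ inK y -> Kv tab x y = 0.
Proof. by rewrite /Kv andbC => /negbTE ->. Qed.
Lemma Kcase x : inK x -> [\/ x = 0%N, x = n.-1, x = n | x = (n + n).-1].
Proof. rewrite /inK; case/orP => [/orP [/orP [] |] |] /eqP ->; [by constructor 1 | by constructor 2 | by constructor 3 | by constructor 4]. Qed.

Lemma inK0 : inK 0 = true. Proof. by rewrite /inK eqxx. Qed.
Lemma inK1 : inK n.-1 = true. Proof. by rewrite /inK eqxx !orbT. Qed.
Lemma inK2 : inK n = true. Proof. by rewrite /inK eqxx !orbT. Qed.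
Lemma inK3 : inK (n + n).-1 = true. Proof. by rewrite /inK eqxx !orbT. Qed.
Lemma code0 : code 0 = 0%N. Proof. by []. Qed.
Lemma code1 : code n.-1 = 1%N. Proof. rewrite /code eqxx; split_ifs; lia. Qed.
Lemma code2 : code n = 2%N. Proof. rewrite /code eqxx; split_ifs; lia. Qed.
Lemma code3 : code (n + n).-1 = 3%N. Proof. rewrite /code; split_ifs; lia. Qed.
Lemma rv0 : rvn n 0 = n.-1. Proof. rewrite /rvn; split_ifs; lia. Qed.
Lemma rv1 : rvn n n.-1 = 0%N. Proof. rewrite /rvn; split_ifs; lia. Qed.
Lemma rv2 : rvn n n = (n + n).-1. Proof. rewrite /rvn; split_ifs; lia. Qed.
Lemma rv3 : rvn n (n + n).-1 = n. Proof. rewrite /rvn; split_ifs; lia. Qed.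
Lemma sw0 : swn n 0 = n. Proof. rewrite /swn; split_ifs; lia. Qed.
Lemma sw1 : swn n n.-1 = (n + n).-1. Proof. rewrite /swn; split_ifs; lia. Qed.
Lemma sw2 : swn n n = 0%N. Proof. rewrite /swn; split_ifs; lia. Qed.
Lemma sw3 : swn n (n + n).-1 = n.-1. Proof. rewrite /swn; split_ifs; lia. Qed.
Lemma lt0 : (0 < n)%N = true. Proof. lia. Qed.
Lemma lt1 : (n.-1 < n)%N = true. Proof. lia. Qed.
Lemma lt2 : (n < n)%N = false. Proof. lia. Qed.
Lemma lt3 : ((n + n).-1 < n)%N = false. Proof. lia. Qed.
Definition cornE := (rv0, rv1, rv2, rv3, sw0, sw1, sw2, sw3).
Definition kvE := (inK0, inK1, inK2, inK3, code0, code1, code2, code3, lt0, lt1, lt2, lt3).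

Lemma S1e : S1 *m Me tab1 = Me tabt *m S1.
Proof.
apply/matrixP => i j; rewrite mulSmx mulmxS !mxE /cb /=.
move: (ltn_ord i) (ltn_ord j); move: (nat_of_ord i) (nat_of_ord j) => x y hx hy.
case: (boolP (inK x)) => kx; last first.
  rewrite !(Kv0l _ _ kx) ?(Kv0l _ _ (_ : ~~ inK (rvn n x))) ?(Kv0l _ _ (_ : ~~ inK (swn n x)))
      ?(Kv0l _ _ (_ : ~~ inK (swn n (rvn n x)))) ?inK_sw ?inK_rv ?rvn_ltn //; lia.
case: (boolP (inK y)) => ky; last first.
  rewrite !(Kv0r _ _ ky) ?(Kv0r _ _ (_ : ~~ inK (rvn n y))) ?(Kv0r _ _ (_ : ~~ inK (swn n y)))
      ?(Kv0r _ _ (_ : ~~ inK (swn n (rvn n y)))) ?inK_sw ?inK_rv ?rvn_ltn //; lia.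
case/Kcase: kx => ?; case/Kcase: ky => ?; subst;
  rewrite !cornE /Kv !kvE /=; lia.
Qed.

Lemma Pb_rv x y : (x < n + n)%N -> (y < n + n)%N -> Pb false (rvn n x) (rvn n y) = Pb false x y.
Proof. rewrite /Pb /rvn => ? ?; split_ifs; lia. Qed.
Lemma Pb_sw x y : (x < n + n)%N -> (y < n + n)%N -> Pb false (swn n x) (swn n y) = Pb false x y.
Proof. rewrite /Pb /swn => ? ?; split_ifs; lia. Qed.
Lemma Pb_blk x y : Pb false x y != 0 -> (x < n)%N = (y < n)%N.
Proof. rewrite /Pb; split_ifs; lia. Qed.

Lemma termeq (f : nat -> nat) (fK : forall x, (x < n + n)%N -> f (f x) = x)
  (fl : forall x, (x < n + n)%N -> (f x < n + n)%N)
  (inv : forall x y, (x < n + n)%N -> (y < n + n)%N -> Pb false (f x) (f y) = Pb false x y)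
  (a b : int) x y : (x < n + n)%N -> (y < n + n)%N ->
  (if (x < n)%N then a else b) * Pb false (f x) y = (if (f y < n)%N then a else b) * Pb false x (f y).
Proof.
move=> hx hy; rewrite -{1}(fK y hy) inv ?fl //.
case: (Pb false x (f y) =P 0) => [->|/eqP nz]; first by rewrite !mulr0.
by rewrite (Pb_blk nz).
Qed.

Lemma rvK' x : (x < n + n)%N -> rvn n (rvn n x) = x.
Proof. rewrite /rvn => ?; split_ifs; lia. Qed.
Lemma swK' x : (x < n + n)%N -> swn n (swn n x) = x.
Proof. rewrite /swn => ?; split_ifs; lia. Qed.
Lemma swrvK' x : (x < n + n)%N -> swn n (rvn n (swn n (rvn n x))) = x.
Proof. rewrite /swn /rvn => ?; split_ifs; lia. Qed.

Lemma Smx_Mb a0 b0 a1 b1 a2 b2 a3 b3 :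
  Smx (cb a0 b0) (cb a1 b1) (cb a2 b2) (cb a3 b3) *m Mb false =
  Mb false *m Smx (cb a0 b0) (cb a1 b1) (cb a2 b2) (cb a3 b3).
Proof.
apply/matrixP => i j; rewrite mulSmx mulmxS !mxE /cb /=.
move: (ltn_ord i) (ltn_ord j); move: (nat_of_ord i) (nat_of_ord j) => x y hx hy.
congr (_ + _ + _ + _).
- exact: (@termeq id (fun x _ => erefl) (fun x h => h) (fun x y _ _ => erefl)).
- exact: (termeq rvK' rvn_ltn Pb_rv).
- exact: (termeq swK' swn_ltn Pb_sw).
- apply: (termeq (f := fun x => swn n (rvn n x))) => //.
  + by move=> z hz /=; apply: swrvK'.
  + by move=> z hz /=; apply: swn_ltn; apply: rvn_ltn.
  + by move=> u v hu hv /=; rewrite Pb_sw ?rvn_ltn // Pb_rv.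
Qed.

Lemma ltn_rv (i : 'I_(n + n)) : ((rv i : nat) < n)%N = (i < n)%N.
Proof. rewrite /= /rvn; have := ltn_ord i; split_ifs; lia. Qed.
Lemma ltn_sw (i : 'I_(n + n)) : ((sw i : nat) < n)%N = ~~ (i < n)%N.
Proof. rewrite /= /swn; have := ltn_ord i; split_ifs; lia. Qed.
Lemma rvswrv (i : 'I_(n + n)) : rv (sw (rv i)) = sw i.
Proof. by rewrite rv_sw rvK. Qed.
Lemma swswrv (i : 'I_(n + n)) : sw (sw (rv i)) = rv i.
Proof. by rewrite swK. Qed.
Lemma swrvsw (i : 'I_(n + n)) : sw (rv (sw i)) = rv i.
Proof. by rewrite rv_sw swK. Qed.
Lemma swrvswrv (i : 'I_(n + n)) : sw (rv (sw (rv i))) = i.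
Proof. by rewrite rv_sw swK rvK. Qed.
Lemma mulrnz (x : int) (b : bool) : x *+ b = x * b%:Z.
Proof. by case: b; rewrite ?mulr1 ?mulr0. Qed.

Lemma SS4 a0 b0 a1 b1 a2 b2 a3 b3 :
  let S := Smx (cb a0 b0) (cb a1 b1) (cb a2 b2) (cb a3 b3) in
  a0 * a0 + a1 * a1 + a2 * b2 + a3 * b3 = 4 ->
  a0 * a1 + a1 * a0 + a2 * b3 + a3 * b2 = 0 ->
  a0 * a2 + a1 * a3 + a2 * b0 + a3 * b1 = 0 ->
  a0 * a3 + a1 * a2 + a2 * b1 + a3 * b0 = 0 ->
  b0 * b0 + b1 * b1 + b2 * a2 + b3 * a3 = 4 ->
  b0 * b1 + b1 * b0 + b2 * a3 + b3 * a2 = 0 ->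
  b0 * b2 + b1 * b3 + b2 * a0 + b3 * a1 = 0 ->
  b0 * b3 + b1 * b2 + b2 * a1 + b3 * a0 = 0 ->
  S *m S = 4%:M.
Proof.
move=> S e0 e1 e2 e3 f0 f1 f2 f3; apply/matrixP => i j.
rewrite mulSmx !mxE /cb ?ltn_sw ?ltn_rv.
rewrite ?rv_sw ?rvK ?swK ?rv_sw ?rvK ?swK ?rvswrv ?swswrv ?swrvsw ?swrvswrv.
rewrite mulrnz (eq_sym i j).
set A := ((j == i)%:Z); set B := ((j == rv i)%:Z);
set C := ((j == sw i)%:Z); set D := ((j == sw (rv i))%:Z).
case: (i < n)%N => /=.
- transitivity ((a0 * a0 + a1 * a1 + a2 * b2 + a3 * b3) * A + (a0 * a1 + a1 * a0 + a2 * b3 + a3 * b2) * B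
    + (a0 * a2 + a1 * a3 + a2 * b0 + a3 * b1) * C + (a0 * a3 + a1 * a2 + a2 * b1 + a3 * b0) * D).
    by ring.
  by rewrite e0 e1 e2 e3; ring.
- transitivity ((b0 * b0 + b1 * b1 + b2 * a2 + b3 * a3) * A + (b0 * b1 + b1 * b0 + b2 * a3 + b3 * a2) * B
    + (b0 * b2 + b1 * b3 + b2 * a0 + b3 * a1) * C + (b0 * b3 + b1 * b2 + b2 * a1 + b3 * a0) * D).
    by ring.
  by rewrite f0 f1 f2 f3; ring.
Qed.

Lemma S1S1 : S1 *m S1 = 4%:M.
Proof. by apply: SS4. Qed.
Lemma SbSb : Sb *m Sb = 4%:M.
Proof. by apply: SS4. Qed.

Lemma Ltdec : Lint (ptrans (gamma1 n)) = Mb false + Me tabt.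
Proof.
apply/matrixP => i j; rewrite (LintE (@F1tE n) (degt hn)) !mxE.
move: (ltn_ord i) (ltn_ord j); move: (nat_of_ord i) (nat_of_ord j) => x y hx hy.
rewrite /Pb /Kv /inK /code /Dt /F1t /PT /F1 /SS /G0 /uu /vv.
split_ifs; lia.
Qed.

Lemma pair1 : S1 *m Lint (gamma1 n) = Lint (ptrans (gamma1 n)) *m S1.
Proof. by rewrite L1dec Ltdec mulmxDr mulmxDl Smx_Mb S1e. Qed.

Definition dd (x : nat) : int := if x == n.-1 then -1 else 1.
Definition Dd : 'M[int]_(n + n) := diag_mx (\row_(i < n + n) dd i).

Lemma DdE (M : 'M[int]_(n + n)) i j : (Dd *m M *m Dd) i j = dd i * M i j * dd j.
Proof. by rewrite /Dd mul_mx_diag mul_diag_mx !mxE. Qed.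

Lemma DdDd : Dd *m Dd = 1%:M.
Proof.
apply/matrixP => i j; rewrite /Dd mulmx_diag !mxE /dd.
by case: (i == j); case: ifP; rewrite //= ?mulrNN ?mulr1.
Qed.

Definition tab2' : seq (seq int) := [:: [:: 3; 1; -1; -1]; [:: 1; 1; 0; 0]; [:: -1; 0; 1; 0]; [:: -1; 0; 0; 1]].
Definition tab3' : seq (seq int) := [:: [:: 2; 1; 1; 0]; [:: 1; 2; 1; 0]; [:: 1; 1; 2; 0]; [:: 0; 0; 0; 0]].

Lemma L2dec : Lint (gamma2 n) = Dd *m (Mb false + Me tab2') *m Dd.
Proof.
apply/matrixP => i j; rewrite DdE (LintE (@F2E n) (deg2 hn)) !mxE.
move: (ltn_ord i) (ltn_ord j); move: (nat_of_ord i) (nat_of_ord j) => x y hx hy.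
rewrite /dd /Pb /Kv /inK /code /D1 /F2 /F1 /SS /G0 /uu /vv.
split_ifs; lia.
Qed.

Lemma L3dec : Lint (gamma3 n) = Dd *m (Mb false + Me tab3') *m Dd.
Proof.
apply/matrixP => i j; rewrite DdE (LintE (@F3E n) (deg3 hn)) !mxE.
move: (ltn_ord i) (ltn_ord j); move: (nat_of_ord i) (nat_of_ord j) => x y hx hy.
rewrite /dd /Pb /Kv /inK /code /Dt /F3 /F1t /PT /F1 /SS /G0 /uu /vv.
split_ifs; lia.
Qed.

Lemma Sbe : Sb *m Me tab2' = Me tab3' *m Sb.
Proof.
apply/matrixP => i j; rewrite mulSmx mulmxS !mxE /cb /=.
move: (ltn_ord i) (ltn_ord j); move: (nat_of_ord i) (nat_of_ord j) => x y hx hy.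
case: (boolP (inK x)) => kx; last first.
  rewrite !(Kv0l _ _ kx) ?(Kv0l _ _ (_ : ~~ inK (rvn n x))) ?(Kv0l _ _ (_ : ~~ inK (swn n x)))
      ?(Kv0l _ _ (_ : ~~ inK (swn n (rvn n x)))) ?inK_sw ?inK_rv ?rvn_ltn //; lia.
case: (boolP (inK y)) => ky; last first.
  rewrite !(Kv0r _ _ ky) ?(Kv0r _ _ (_ : ~~ inK (rvn n y))) ?(Kv0r _ _ (_ : ~~ inK (swn n y)))
      ?(Kv0r _ _ (_ : ~~ inK (swn n (rvn n y)))) ?inK_sw ?inK_rv ?rvn_ltn //; lia.
case/Kcase: kx => ?; case/Kcase: ky => ?; subst;
  rewrite !cornE /Kv !kvE /=; lia.
Qed.

Lemma pair2 : Sb *m (Mb false + Me tab2') = (Mb false + Me tab3') *m Sb.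
Proof. by rewrite mulmxDr mulmxDl Smx_Mb Sbe. Qed.

Lemma cp_conj (M : 'M[int]_(n + n)) : char_poly (Dd *m M *m Dd) = char_poly M.
Proof.
symmetry; apply: (@sim_cp _ _ _ Dd 1) => //; first by rewrite DdDd.
by rewrite -!mulmxA DdDd mulmx1.
Qed.
End Big.

Lemma cosp2 m (s t : sgraph m) : char_poly (Lint s) = char_poly (Lint t) -> lap_cospectral s t.
Proof. by move=> e; rewrite /lap_cospectral !lapE -!map_char_poly e. Qed.

Lemma iso_deg m (s t : sgraph m) (f : {perm 'I_m}) :
  (forall x y, t (f x) (f y) = s x y) -> forall x, degree t (f x) = degree s x.
Proof.
move=> h x; rewrite /degree -!sum1_card (reindex_inj (@perm_inj _ f)) /=.
by apply: eq_bigl => k; rewrite !inE h.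
Qed.

Theorem theorem3p1 (n : nat) (hn : (3 <= n)%N) :
  (~ sg_iso (gamma1 n) (ptrans (gamma1 n)) /\
     lap_cospectral (gamma1 n) (ptrans (gamma1 n))) /\
  (~ sg_iso (gamma2 n) (gamma3 n) /\ lap_cospectral (gamma2 n) (gamma3 n)).
Proof.
have hn' : (2 < n)%N by [].
have h0 : (0 < n + n)%N by lia.
pose o : 'I_(n + n) := Ordinal h0.
split; split.
- case=> f h; have := iso_deg h o.
  by rewrite (degt hn') (deg1 hn') /D1 /Dt /=; case: ifP => _ //; case: ifP.
- apply: cosp2; apply: (@sim_cp _ _ _ (S1 n) 4) => //; first exact: S1S1.
  exact: pair1.
- case=> f h; have := iso_deg h o.
  by rewrite (deg3 hn') (deg2 hn') /D1 /Dt /=; case: ifP => _ //; case: ifP.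
- apply: cosp2; rewrite (L2dec hn') (L3dec hn') !cp_conj.
  apply: (@sim_cp _ _ _ (Sb n) 4) => //; first exact: SbSb.
  exact: pair2.
Qed.
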